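(* Let $\mathcal A=(Q,\Sigma,\delta,\rho)$ be a connected bireversible Mealy automaton whose labeled orbit tree $\mathfrak t(\mathcal A)$ has no active self-liftable branch, and let $\mathfrak j$ be a jungle tree with trunk of length $n$. For a $\mathfrak j$-word $\mathbf u$ with $|\mathbf u|<n$, a $\sim$-class $\gamma$ of stems containing a stem with prefix $\mathbf u$, and an integer $k\ge0$ with $|\mathbf u|+k\le n$, let $N(\mathbf u,\gamma,k)$ be the number of words $\mathbf v\in Q^k$ such that $\mathbf{uv}$ is a prefix of some stem in $\gamma$. Then $N(\mathbf u,\gamma,k)$ depends only on $|\mathbf u|$ and $k$: if $(\mathbf u,\gamma,k)$ and $(\mathbf u',\gamma',k)$ are two such triples with $|\mathbf u|=|\mathbf u'|$, then $N(\mathbf u,\gamma,k)=N(\mathbf u',\gamma',k)$.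
   Context: Mealy automata. A Mealy automaton is $\mathcal A=(Q,\Sigma,\delta,\rho)$ with $Q,\Sigma$ finite non-empty sets, $\delta=(\delta_i\colon Q\to Q)_{i\in\Sigma}$, $\rho=(\rho_x\colon\Sigma\to\Sigma)_{x\in Q}$; transitions $x\xrightarrow{i\mid\rho_x(i)}\delta_i(x)$. Invertible: each $\rho_x$ a permutation of $\Sigma$; reversible: each $\delta_i$ a permutation of $Q$; bireversible: invertible, reversible, and for each $j\in\Sigma$ the map $x\mapsto\delta_{\rho_x^{-1}(j)}(x)$ is a permutation of $Q$. Connected: the directed graph on $Q$ with edges $x\to\delta_i(x)$ is connected. Extensions: $\rho_x(i\mathbf s)=\rho_x(i)\rho_{\delta_i(x)}(\mathbf s)$; $\rho_{x_1\cdots x_m}=\rho_{x_m}\circ\cdots\circ\rho_{x_1}$; $\delta_i(x\mathbf u)=\delta_i(x)\delta_{\rho_x(i)}(\mathbf u)$ on $Q^*$, $\delta_{i_1\cdots i_m}=\delta_{i_m}\circ\cdots\circ\delta_{i_1}$. The connected components of $\mathcal A^n$ (stateset $Q^n$, transitions $\mathbf u\xrightarrow{i\mid\rho_{\mathbf u}(i)}\delta_i(\mathbf u)$) are, for reversible $\mathcal A$, the orbits of $Q^n$ under the maps $\delta_{\mathbf s}$. Orbit tree $\mathfrak t(\mathcal A)$: vertices at level $n\ge0$ are the connected components of $\mathcal A^n$; an edge from the component of $\mathbf u\in Q^n$ to that of $\mathbf ux$ for all $\mathbf u,x$; edge $C\to D$ labeled $\#D/\#C$. $\top,\bot$ = first/last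 vertex of a downward path; level of an edge/path = level of its top vertex. A word of $Q^*\cup Q^\omega$ represents the initial path through the components of its prefixes. Edge $e$ is liftable to $f$ if every word of $\bot(e)$ has a suffix in $\bot(f)$; paths are liftable if corresponding edges are. $f$ is a legitimate child of $e$ if $\top(f)=\bot(e)$ and $f$ is liftable to $e$. A path/subtree $\mathfrak s$ is $k$-self-liftable if for all $i\ge0$ every path in $\mathfrak s$ starting at level $i+k$ is liftable to a path in $\mathfrak s$ starting at level $i$; self-liftable if $k$-self-liftable for some $k>0$. A branch (infinite initial path) is active if its labels are not eventually all $1$. Jungle trees: for a finite 1-self-liftable initial path $\mathbf e$ of length $n$ whose last edge has at least two legitimate children, all labeled $1$, $\mathfrak j(\mathbf e)$ consists of $\mathbf e$ plus all edges descending from $\bot(\mathbf e)$ that are liftable to the last edge of $\mathbf e$. Stems: the words of $\bot(\mathbf e)\subseteq Q^n$. A $\mathfrak j$-word is a word representing an initial path of $\mathfrak j$. For stems $\mathbf u,\mathbf v$: $\mathbf u\sim\mathbf v$ iff there is $\mathbf s\in Q^*$ such that $\mathbf{usv}$ is a $\mathfrak j$-word and $\rho_{\mathbf{us}}$ is the identity of $\Sigma^*$; $\sim$ is an equivalence relation. *)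

(* Defs.v *)
From mathcomp Require Import all_boot.
From Stdlib Require Import Relations ClassicalDescription.

Set Implicit Arguments.
Unset Strict Implicit.
Unset Printing Implicit Defensive.

Definition pbool (P : Prop) : bool :=
  if excluded_middle_informative P then true else false.

Section Mealy.
Variables (Q Sigma : finType).
(* delta i x = δ_i(x),   rho x i = ρ_x(i) *)
Variable delta : Sigma -> Q -> Q.
Variable rho : Q -> Sigma -> Sigma.

Fixpoint rhoS (x : Q) (s : seq Sigma) : seq Sigma :=
  if s is i :: s' then rho x i :: rhoS (delta i x) s' else [::].

(* ρ_{x1...xm} = ρ_{xm} ∘ ... ∘ ρ_{x1} *)
Definition rhoW (u : seq Q) (s : seq Sigma) : seq Sigma :=
  foldl (fun t x => rhoS x t) s u.

Fixpoint deltaS (i : Sigma) (u : seq Q) : seq Q :=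
  if u is x :: u' then delta i x :: deltaS (rho x i) u' else [::].

Definition step (u v : seq Q) : Prop := exists i, deltaS i u = v.

(* u and v lie in the same connected component of A^{|u|}
   (connected components of the underlying directed graph). *)
Definition sameComp : seq Q -> seq Q -> Prop := clos_refl_sym_trans _ step.

Definition connectedA : Prop := forall x y : Q, sameComp [:: x] [:: y].

Definition invertibleA : Prop := forall x, bijective (rho x).
Definition reversibleA : Prop := forall i, bijective (delta i).
Definition bireversibleA : Prop :=
  [/\ invertibleA, reversibleA &
      forall j : Sigma, bijective (fun x : Q => delta (finv (rho x) j) x)].

(* cardinality #C of the component C of the word w (a vertex of t(A)) *)
Definition compCard (w : seq Q) : nat :=
  #|[set t : (size w).-tuple Q | pbool (sameComp w (tval t))]|.

(* A vertex at level m is the component of a word of length m.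
   An edge at level m (from level m to level m+1) is represented by any word
   w of length m+1 of its bottom vertex ⊥(e) = component of w;
   its top vertex is the component of take m w.  Its label is
   compCard w / compCard (take m w). *)

Definition edgeLift (e f : seq Q) : Prop :=
  forall w, sameComp e w -> exists p s, w = p ++ s /\ sameComp f s.

(* p = [:: e_0; ...; e_{r-1}] is a downward path starting at level l *)
Definition isPath (l : nat) (p : seq (seq Q)) : Prop :=
  (forall j, j < size p -> size (nth [::] p j) = l + j + 1) /\
  (forall j, j.+1 < size p ->
     sameComp (take (l + j + 1) (nth [::] p j.+1)) (nth [::] p j)).

Definition pathLift (p q : seq (seq Q)) : Prop :=
  size p = size q /\
  forall j, j < size p -> edgeLift (nth [::] p j) (nth [::] q j).

(* A subtree / path is given as a predicate on (representatives of) edges. *)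
Definition pathIn (S : seq Q -> Prop) (p : seq (seq Q)) : Prop :=
  forall e, e \in p -> S e.

Definition kSelfLiftable (k : nat) (S : seq Q -> Prop) : Prop :=
  forall i p, isPath (i + k) p -> pathIn S p ->
    exists q, isPath i q /\ pathIn S q /\ pathLift p q.

Definition selfLiftable (S : seq Q -> Prop) : Prop :=
  exists k, 0 < k /\ kSelfLiftable k S.

(* A branch: b m is a word representing its vertex at level m. *)
Definition isBranch (b : nat -> seq Q) : Prop :=
  (forall m, size (b m) = m) /\
  (forall m, sameComp (take m (b m.+1)) (b m)).

Definition branchEdges (b : nat -> seq Q) (w : seq Q) : Prop :=
  0 < size w /\ sameComp w (b (size w)).

(* active: the labels are not eventually all 1 *)
Definition activeBranch (b : nat -> seq Q) : Prop :=
  forall M, exists m, M <= m /\ compCard (b m.+1) <> compCard (b m).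

Definition pathEdges (p : seq (seq Q)) (w : seq Q) : Prop :=
  exists e, e \in p /\ sameComp e w.

Definition legitChild (e f : seq Q) : Prop :=
  size f = (size e).+1 /\ sameComp (take (size e) f) e /\ edgeLift f e.

(* p is the trunk of a jungle tree: a finite 1-self-liftable initial path
   whose last edge has at least two legitimate children, all labeled 1. *)
Definition jungleTrunk (p : seq (seq Q)) : Prop :=
  [/\ 0 < size p, isPath 0 p, kSelfLiftable 1 (pathEdges p),
      (exists f1 f2, legitChild (last [::] p) f1 /\ legitChild (last [::] p) f2
                     /\ ~ sameComp f1 f2) &
      (forall f, legitChild (last [::] p) f ->
                 compCard f = compCard (last [::] p))].

Definition jungleEdges (p : seq (seq Q)) (w : seq Q) : Prop :=
  pathEdges p w \/
  [/\ size p < size w, sameComp (take (size p) w) (last [::] p) &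
      edgeLift w (last [::] p)].

(* stems: words of ⊥(p) *)
Definition stem (p : seq (seq Q)) (w : seq Q) : Prop :=
  sameComp w (last [::] p).

(* j-word: a word representing an initial path of j(p) *)
Definition jWord (p : seq (seq Q)) (w : seq Q) : Prop :=
  forall m, 0 < m <= size w -> jungleEdges p (take m w).

Definition simStem (p : seq (seq Q)) (u v : seq Q) : Prop :=
  exists s, jWord p (u ++ s ++ v) /\ forall t, rhoW (u ++ s) t = t.

Definition simClass (p : seq (seq Q)) (g : seq Q) (w : seq Q) : Prop :=
  stem p w /\ simStem p w g.

(* N(u, γ, k) with γ the ~-class of the stem g *)
Definition Ncount (p : seq (seq Q)) (u g : seq Q) (k : nat) : nat :=
  #|[set v : k.-tuple Q |
      pbool (exists w, simClass p g w /\ prefix (u ++ tval v) w)]|.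

Definition admissible (p : seq (seq Q)) (u g : seq Q) (k : nat) : Prop :=
  [/\ jWord p u, size u < size p, stem p g,
      (exists w, simClass p g w /\ prefix u w) & size u + k <= size p].

End Mealy.

(* Main.v *)
Require Import Defs.
From mathcomp Require Import all_boot.
From Stdlib Require Import Relations ClassicalDescription.
From mathcomp Require Import zify.
Set Implicit Arguments. Unset Strict Implicit. Unset Printing Implicit Defensive.

Definition rhoI (Q Sigma : finType) (rho : Q -> Sigma -> Sigma) (a : seq Q) (i : Sigma) :=
  foldl (fun j x => rho x j) i a.
Definition deltaW (Q Sigma : finType) (delta : Sigma -> Q -> Q) (rho : Q -> Sigma -> Sigma)
  (r : seq Sigma) (w : seq Q) := foldl (fun w i => deltaS delta rho i w) w r.

Lemma rhoW_cons (Q Sigma : finType) (delta : Sigma -> Q -> Q) (rho : Q -> Sigma -> Sigma) u i s :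
  rhoW delta rho u (i :: s) = rhoI rho u i :: rhoW delta rho (deltaS delta rho i u) s.
Proof.
elim: u i s => [|x u IH] i s //.
rewrite /rhoW /=. rewrite -/(rhoW _ _ _ _). rewrite IH. done.
Qed.

Lemma deltaS_cat (Q Sigma : finType) (delta : Sigma -> Q -> Q) (rho : Q -> Sigma -> Sigma) i a b :
  deltaS delta rho i (a ++ b) = deltaS delta rho i a ++ deltaS delta rho (rhoI rho a i) b.
Proof. by elim: a i => [|x a IH] i //=; rewrite IH. Qed.

Lemma size_deltaS (Q Sigma : finType) (delta : Sigma -> Q -> Q) (rho : Q -> Sigma -> Sigma) i a :
  size (deltaS delta rho i a) = size a.
Proof. by elim: a i => [|x a IH] i //=; rewrite IH. Qed.

Lemma size_deltaW (Q Sigma : finType) (delta : Sigma -> Q -> Q) (rho : Q -> Sigma -> Sigma) r a :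
  size (deltaW delta rho r a) = size a.
Proof. by elim: r a => [|i r IH] a //=; rewrite /deltaW /= -/(deltaW _ _ _ _) IH size_deltaS. Qed.

Lemma deltaW_cat (Q Sigma : finType) (delta : Sigma -> Q -> Q) (rho : Q -> Sigma -> Sigma) r a b :
  deltaW delta rho r (a ++ b) = deltaW delta rho r a ++ deltaW delta rho (rhoW delta rho a r) b.
Proof.
elim: r a b => [|i r IH] a b.
  have -> : rhoW delta rho a [::] = [::] by rewrite /rhoW; elim: a.
  done.
rewrite /deltaW /= -!/(deltaW _ _ _ _) deltaS_cat IH rhoW_cons.
by rewrite /deltaW /= -!/(deltaW _ _ _ _).
Qed.

Lemma rhoW_id (Q Sigma : finType) (delta : Sigma -> Q -> Q) (rho : Q -> Sigma -> Sigma) a i :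
  (forall t, rhoW delta rho a t = t) ->
  rhoI rho a i = i /\ forall t, rhoW delta rho (deltaS delta rho i a) t = t.
Proof.
move=> H; have := H (i :: [::]); rewrite rhoW_cons => -[E _]; split => // t.
by have := H (i :: t); rewrite rhoW_cons => -[_].
Qed.

Lemma deltaS_inj (Q Sigma : finType) (delta : Sigma -> Q -> Q) (rho : Q -> Sigma -> Sigma) i :
  reversibleA delta -> injective (deltaS delta rho i).
Proof.
move=> rev a; elim: a i => [|x a IH] i [|y b] //= [E1 E2].
have ix := bij_inj (rev i); have exy := ix _ _ E1; subst y.
by rewrite (IH _ _ E2).
Qed.


Definition fwd (Q Sigma : finType) (delta : Sigma -> Q -> Q) (rho : Q -> Sigma -> Sigma)
  (a b : seq Q) := exists r, deltaW delta rho r a = b.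

Lemma deltaW_rcat (Q Sigma : finType) (delta : Sigma -> Q -> Q) (rho : Q -> Sigma -> Sigma) r1 r2 a :
  deltaW delta rho (r1 ++ r2) a = deltaW delta rho r2 (deltaW delta rho r1 a).
Proof. by rewrite /deltaW foldl_cat. Qed.

Lemma fwd_trans (Q Sigma : finType) (delta : Sigma -> Q -> Q) (rho : Q -> Sigma -> Sigma) a b c :
  fwd delta rho a b -> fwd delta rho b c -> fwd delta rho a c.
Proof. by move=> [r1 <-] [r2 <-]; exists (r1 ++ r2); rewrite deltaW_rcat. Qed.

Lemma deltaW_inj (Q Sigma : finType) (delta : Sigma -> Q -> Q) (rho : Q -> Sigma -> Sigma) r :
  reversibleA delta -> injective (deltaW delta rho r).
Proof.
move=> rev; elim: r => [|i r IH] a b //=.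
rewrite /deltaW /= -!/(deltaW _ _ _ _) => /IH; exact: deltaS_inj.
Qed.

Lemma fwd_sym (Q Sigma : finType) (delta : Sigma -> Q -> Q) (rho : Q -> Sigma -> Sigma) a b :
  reversibleA delta -> fwd delta rho a b -> fwd delta rho b a.
Proof.
move=> rev [r E].
pose n := size a.
have szF : forall t : n.-tuple Q, size (deltaW delta rho r t) == n.
  by move=> t; rewrite size_deltaW size_tuple.
pose F := fun t : n.-tuple Q => Tuple (szF t).
have injF : injective F.
  by move=> t1 t2 /(congr1 val) /= /(deltaW_inj (rho:=rho) (r:=r) rev) /val_inj.
have sza : size a == n by [].
pose ta := Tuple sza.
have Hit : forall m (x : n.-tuple Q), fwd delta rho (val x) (val (iter m F x)).
  elim=> [|m IH] x; first by exists [::].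
  apply: fwd_trans (IH x) _; by exists r.
have := finv_f injF ta; rewrite /finv => Ee.
have := Hit (fingraph.order F (F ta)).-1 (F ta); rewrite Ee /=; rewrite E; done.
Qed.

Lemma sameComp_fwd (Q Sigma : finType) (delta : Sigma -> Q -> Q) (rho : Q -> Sigma -> Sigma) a b :
  reversibleA delta -> sameComp delta rho a b -> fwd delta rho a b.
Proof.
move=> rev; elim=> [x y [i <-]|x|x y _ IH|x y z _ H1 _ H2].
- by exists [:: i].
- by exists [::].
- exact: fwd_sym.
- exact: fwd_trans H1 H2.
Qed.

Lemma fwd_sameComp (Q Sigma : finType) (delta : Sigma -> Q -> Q) (rho : Q -> Sigma -> Sigma) a b :
  fwd delta rho a b -> sameComp delta rho a b.
Proof.
move=> [r <-]; elim: r a => [|i r IH] a; first exact: rst_refl.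
rewrite /deltaW /= -/(deltaW _ _ _ _).
apply: rst_trans (IH _); apply: rst_step; by exists i.
Qed.

Lemma sameComp_size (Q Sigma : finType) (delta : Sigma -> Q -> Q) (rho : Q -> Sigma -> Sigma) a b :
  sameComp delta rho a b -> size a = size b.
Proof.
elim=> [x y [i <-]|x|x y _ IH|x y z _ H1 _ H2] //.
- by rewrite size_deltaS.
- by rewrite H1.
Qed.

Lemma take_deltaS (Q Sigma : finType) (delta : Sigma -> Q -> Q) (rho : Q -> Sigma -> Sigma) i m a :
  take m (deltaS delta rho i a) = deltaS delta rho i (take m a).
Proof. by elim: a i m => [|x a IH] i [|m] //=; rewrite IH. Qed.

Lemma take_deltaW (Q Sigma : finType) (delta : Sigma -> Q -> Q) (rho : Q -> Sigma -> Sigma) r m a :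
  take m (deltaW delta rho r a) = deltaW delta rho r (take m a).
Proof.
elim: r a => [|i r IH] a //.
by rewrite /deltaW /= -!/(deltaW _ _ _ _) IH take_deltaS.
Qed.

Lemma sameComp_take (Q Sigma : finType) (delta : Sigma -> Q -> Q) (rho : Q -> Sigma -> Sigma) m a b :
  sameComp delta rho a b -> sameComp delta rho (take m a) (take m b).
Proof.
elim=> [x y [i <-]|x|x y _ IH|x y z _ H1 _ H2].
- apply: rst_step; exists i; by rewrite take_deltaS.
- exact: rst_refl.
- exact: rst_sym.
- exact: rst_trans H1 H2.
Qed.


Lemma deltaW_period (Q Sigma : finType) (delta : Sigma -> Q -> Q) (rho : Q -> Sigma -> Sigma) r a :
  reversibleA delta -> exists K, iter K (deltaW delta rho r) (deltaW delta rho r a) = a.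
Proof.
move=> rev.
pose n := size a.
have szF : forall t : n.-tuple Q, size (deltaW delta rho r t) == n.
  by move=> t; rewrite size_deltaW size_tuple.
pose F := fun t : n.-tuple Q => Tuple (szF t).
have injF : injective F.
  by move=> t1 t2 /(congr1 val) /= /(deltaW_inj (rho:=rho) (r:=r) rev) /val_inj.
have sza : size a == n by [].
pose ta := Tuple sza.
have Hit : forall m (x : n.-tuple Q), val (iter m F x) = iter m (deltaW delta rho r) (val x).
  by elim=> [|m IH] x //=; rewrite IH.
exists (fingraph.order F (F ta)).-1.
have := finv_f injF ta; rewrite /finv => Ee.
by have := Hit (fingraph.order F (F ta)).-1 (F ta); rewrite Ee /= => <-.
Qed.

Lemma pathEdges_size (Q Sigma : finType) (delta : Sigma -> Q -> Q) (rho : Q -> Sigma -> Sigma) p w :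
  isPath delta rho 0 p -> pathEdges delta rho p w -> size w <= size p.
Proof.
move=> [Hs _] [e [Hin He]].
move: Hin => /(nthP [::]) [j Hj Ej].
rewrite -(sameComp_size He) -Ej Hs //. by rewrite addn1.
Qed.

Lemma size_last (Q Sigma : finType) (delta : Sigma -> Q -> Q) (rho : Q -> Sigma -> Sigma) p :
  0 < size p -> isPath delta rho 0 p -> size (last [::] p) = size p.
Proof.
move=> Hp [Hs _]; rewrite -nth_last Hs; first by rewrite add0n addn1 prednK.
by rewrite prednK.
Qed.

Lemma jE_comp (Q Sigma : finType) (delta : Sigma -> Q -> Q) (rho : Q -> Sigma -> Sigma) p x y :
  sameComp delta rho x y -> jungleEdges delta rho p x -> jungleEdges delta rho p y.
Proof.
move=> Hxy [[e [He Hex]]|[H1 H2 H3]].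
- left; exists e; split => //; exact: rst_trans Hex Hxy.
- right; split.
  + by rewrite -(sameComp_size Hxy).
  + apply: rst_trans H2; apply: rst_sym; exact: sameComp_take.
  + move=> z Hz; apply: H3; exact: rst_trans Hxy Hz.
Qed.

Lemma jWord_deltaW (Q Sigma : finType) (delta : Sigma -> Q -> Q) (rho : Q -> Sigma -> Sigma) p r w :
  jWord delta rho p w -> jWord delta rho p (deltaW delta rho r w).
Proof.
move=> Hw m; rewrite size_deltaW => Hm.
rewrite take_deltaW; apply: (jE_comp (x := take m w)); last exact: Hw.
by apply: fwd_sameComp; exists r.
Qed.

Lemma rhoW_cat (Q Sigma : finType) (delta : Sigma -> Q -> Q) (rho : Q -> Sigma -> Sigma) a b t :
  rhoW delta rho (a ++ b) t = rhoW delta rho b (rhoW delta rho a t).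
Proof. by rewrite /rhoW foldl_cat. Qed.

Lemma rhoW_idW (Q Sigma : finType) (delta : Sigma -> Q -> Q) (rho : Q -> Sigma -> Sigma) a r :
  (forall t, rhoW delta rho a t = t) -> forall t, rhoW delta rho (deltaW delta rho r a) t = t.
Proof.
elim: r a => [|i r IH] a H //.
rewrite /deltaW /= -/(deltaW _ _ _ _); apply: IH.
by have [_ H2] := rhoW_id i H.
Qed.

Lemma deltaW_catid (Q Sigma : finType) (delta : Sigma -> Q -> Q) (rho : Q -> Sigma -> Sigma) r a b :
  (forall t, rhoW delta rho a t = t) ->
  deltaW delta rho r (a ++ b) = deltaW delta rho r a ++ deltaW delta rho r b.
Proof. by move=> H; rewrite deltaW_cat H. Qed.

Lemma sim_deltaW (Q Sigma : finType) (delta : Sigma -> Q -> Q) (rho : Q -> Sigma -> Sigma) p r y a :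
  simStem delta rho p y a ->
  simStem delta rho p (deltaW delta rho r y) (deltaW delta rho r a).
Proof.
move=> [s [Hj Hid]].
exists (deltaW delta rho (rhoW delta rho y r) s); split.
- have := jWord_deltaW (r:=r) Hj.
  by rewrite catA deltaW_catid // deltaW_cat catA.
- by rewrite -deltaW_cat; apply: rhoW_idW.
Qed.


Lemma sim_trans (Q Sigma : finType) (delta : Sigma -> Q -> Q) (rho : Q -> Sigma -> Sigma) p y a b :
  reversibleA delta -> 0 < size p -> isPath delta rho 0 p ->
  stem delta rho p y -> stem delta rho p a ->
  simStem delta rho p y a -> simStem delta rho p a b -> simStem delta rho p y b.
Proof.
move=> rev Hp0 Hpath Sy Sa [s [Hj1 Hid1]] [s' [Hj2 Hid2]].
have szy : size y = size p by rewrite (sameComp_size Sy) (size_last Hp0 Hpath).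
have sza : size a = size p by rewrite (sameComp_size Sa) (size_last Hp0 Hpath).
exists (s ++ a ++ s'); split; last first.
  by move=> t; rewrite !catA -catA rhoW_cat Hid1 Hid2.
move=> m Hm.
have -> : y ++ (s ++ a ++ s') ++ b = (y ++ s ++ a) ++ (s' ++ b) by rewrite !catA.
case: (leqP m (size (y ++ s ++ a))) => Hle.
  rewrite takel_cat //; apply: Hj1; case/andP: Hm => -> _; by rewrite Hle.
rewrite take_cat ltnNge (ltnW Hle) /=.
set x := take _ (s' ++ b).
have Hx : 0 < size x.
  rewrite /x size_take; case: ifP => _; first by rewrite subn_gt0.
  move: Hm; rewrite !size_cat => /andP[_]; move: Hle; rewrite !size_cat. lia.
right; split.
- move: Hle; rewrite !size_cat szy; lia.
- rewrite -catA takel_cat; last by rewrite szy.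
  by rewrite -szy take_size.
- move=> z Hz.
  have [r Er] := sameComp_fwd rev Hz.
  have Hax : jungleEdges delta rho p (a ++ x).
    have := Hj2 (size (a ++ x)).
    have Ex : take (size x) (s' ++ b) = x.
      rewrite /x size_take; case: ifP => // /negbT; rewrite -leqNgt => H.
      by rewrite take_size take_oversize.
    rewrite take_cat !size_cat (_ : size a + size x < size a = false); last by lia.
    rewrite addKn Ex; apply.
    rewrite addn_gt0 Hx orbT /= leq_add2l.
    rewrite /x size_take !size_cat; case: ifP => H; lia.
  case: Hax => [Hpe|[_ _ H3]].
    have := pathEdges_size Hpath Hpe; rewrite size_cat sza; lia.
  have [pre [suf [E1 E2]]] := H3 (deltaW delta rho r (a ++ x)) (fwd_sameComp (ex_intro _ r erefl)).
  exists (deltaW delta rho r (y ++ s) ++ pre), suf; split => //.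
  by rewrite -Er -!catA catA deltaW_catid // E1 catA.
Qed.


Lemma stem_deltaW (Q Sigma : finType) (delta : Sigma -> Q -> Q) (rho : Q -> Sigma -> Sigma) p r y :
  stem delta rho p y -> stem delta rho p (deltaW delta rho r y).
Proof.
move=> H; apply: rst_trans H; apply: rst_sym; apply: fwd_sameComp; by exists r.
Qed.

Lemma stem_iter (Q Sigma : finType) (delta : Sigma -> Q -> Q) (rho : Q -> Sigma -> Sigma) p r j y :
  stem delta rho p y -> stem delta rho p (iter j (deltaW delta rho r) y).
Proof. by elim: j => [|j IH] //= Hy; apply: stem_deltaW; apply: IH. Qed.

Lemma sim_sym (Q Sigma : finType) (delta : Sigma -> Q -> Q) (rho : Q -> Sigma -> Sigma) p y a :
  reversibleA delta -> 0 < size p -> isPath delta rho 0 p ->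
  stem delta rho p y -> stem delta rho p a ->
  simStem delta rho p y a -> simStem delta rho p a y.
Proof.
move=> rev Hp0 Hpath Sy Sa Hya.
have [r Er] : fwd delta rho y a.
  apply: sameComp_fwd rev _; apply: rst_trans Sy _; exact: rst_sym.
set F := deltaW delta rho r.
have ErF : F y = a := Er.
have Hch : forall j, simStem delta rho p (iter j F y) (iter j.+1 F y).
  elim=> [|j IH] /=; first by rewrite /= ErF.
  exact: sim_deltaW.
have Hch2 : forall j, simStem delta rho p a (iter j.+2 F y).
  elim=> [|j IH]; first by have := Hch 1; rewrite /= ErF.
  apply: sim_trans rev Hp0 Hpath Sa _ IH (Hch j.+2).
  exact: stem_iter.
have [K EK] := deltaW_period rho r y rev.
rewrite -/F -iterSr in EK.
case: K EK => [|K] EK.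
  have Eay : a = y by rewrite -ErF; exact: EK.
  by rewrite Eay; rewrite Eay in Hya.
by have := Hch2 K; rewrite EK.
Qed.


Lemma pboolE (P : Prop) : pbool P = true <-> P.
Proof. by rewrite /pbool; case: excluded_middle_informative. Qed.

Lemma Ncount_le (Q Sigma : finType) (delta : Sigma -> Q -> Q) (rho : Q -> Sigma -> Sigma) p u g u' g' k :
  reversibleA delta -> 0 < size p -> isPath delta rho 0 p ->
  admissible delta rho p u g k -> admissible delta rho p u' g' k -> size u = size u' ->
  Ncount delta rho p u g k <= Ncount delta rho p u' g' k.
Proof.
move=> rev Hp0 Hpath [_ _ Sg [w [[Sw Hwg] Hpw]] _] [_ _ Sg' [w' [[Sw' Hwg'] Hpw']] _] Hsz.
have [r Er] : fwd delta rho w w'.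
  apply: sameComp_fwd rev _; apply: rst_trans Sw _; exact: rst_sym.
set F := deltaW delta rho r.
have ErF : F w = w' := Er.
have Fu : F u = u'.
  move/prefixP: Hpw => [w1 Ew]; move/prefixP: Hpw' => [w1' Ew'].
  have := congr1 (take (size u)) ErF.
  rewrite /F take_deltaW Ew take_size_cat // Ew' take_size_cat //.
have Hcls : forall y, simClass delta rho p g y -> simClass delta rho p g' (F y).
  move=> y [Sy Hyg]; split; first exact: stem_deltaW.
  have SFg : stem delta rho p (F g) by exact: stem_deltaW.
  have SFw : stem delta rho p (F w) by exact: stem_deltaW.
  have SFy : stem delta rho p (F y) by exact: stem_deltaW.
  have H1 : simStem delta rho p (F y) (F g) by exact: sim_deltaW.
  have H2 : simStem delta rho p (F g) (F w).
    apply: sim_sym rev Hp0 Hpath SFw SFg _; exact: sim_deltaW.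
  have H3 := sim_trans rev Hp0 Hpath SFy SFg H1 H2.
  rewrite ErF in H3 SFw.
  exact: sim_trans rev Hp0 Hpath SFy SFw H3 Hwg'.
set r' := rhoW delta rho u r.
have szh : forall v : k.-tuple Q, size (deltaW delta rho r' v) == k.
  by move=> v; rewrite size_deltaW size_tuple.
pose h := fun v : k.-tuple Q => Tuple (szh v).
have injh : injective h.
  by move=> t1 t2 /(congr1 val) /= /(deltaW_inj (rho:=rho) (r:=r') rev) /val_inj.
rewrite /Ncount -(card_imset _ injh); apply: subset_leq_card.
apply/subsetP => z /imsetP [v]; rewrite inE => /pboolE [y [Hy Hpy]] ->.
rewrite inE; apply/pboolE; exists (F y); split; first exact: Hcls.
move/prefixP: Hpy => [rest ->]; apply/prefixP.
exists (deltaW delta rho (rhoW delta rho (u ++ v) r) rest).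
rewrite /F -catA deltaW_cat (Fu : deltaW delta rho r u = u') deltaW_cat catA rhoW_cat.
by [].
Qed.


Theorem proposition5p13 (Q Sigma : finType)
  (delta : Sigma -> Q -> Q) (rho : Q -> Sigma -> Sigma) :
  0 < #|Q| -> 0 < #|Sigma| ->
  connectedA delta rho ->
  bireversibleA delta rho ->
  ~ (exists b, isBranch delta rho b /\ activeBranch delta rho b /\
               selfLiftable delta rho (branchEdges delta rho b)) ->
  forall p : seq (seq Q), jungleTrunk delta rho p ->
  forall (u g u' g' : seq Q) (k : nat),
    admissible delta rho p u g k -> admissible delta rho p u' g' k ->
    size u = size u' ->
    Ncount delta rho p u g k = Ncount delta rho p u' g' k.
Proof.
move=> _ _ _ [_ rev _] _ p [Hp0 Hpath _ _ _] u g u' g' k A1 A2 Hs.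
apply/eqP; rewrite eqn_leq; apply/andP; split.
- exact: Ncount_le rev Hp0 Hpath A1 A2 Hs.
- exact: Ncount_le rev Hp0 Hpath A2 A1 (esym Hs).
Qed.
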